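(* Let $[n]=A\cup B$ with $A\cap B=\emptyset$, let $t_1,t_2\ge0$ be integers, let $r\ge1$, and let $\mathcal C$ be an $[n,k]$ linear code over a finite field such that: (1) for every nonempty $E\subseteq A$ with $|E|\le t_1$ there is $i\in E$ having a recovering set $R\subseteq A\setminus E$; (2) for every nonempty $E\subseteq A$ with $|E|\le t_1+t_2+1$ there is $i\in E$ having a recovering set $R\subseteq[n]\setminus E$; (3) for every nonempty $E\subseteq B$ with $|E|\le t_2$ there is $i\in E$ having a recovering set $R\subseteq B\setminus E$; (4) for every nonempty $E\subseteq B$ with $|E|\le t_1+t_2+1$ there is $i\in E$ having a recovering set $R\subseteq[n]\setminus E$; where all recovering sets mentioned have size at most $r$. Then $\mathcal C$ is an $(n,k,r,t)$-SLRC with $t=t_1+t_2+1$.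
   Context: For $i\in[n]$, a recovering set of $i$ is a set $R\subseteq[n]\setminus\{i\}$ such that there exist nonzero field elements $a_j$ ($j\in R$) with $x_i=\sum_{j\in R}a_jx_j$ for all codewords $x\in\mathcal C$. $\mathcal C$ is an $(n,k,r,t)$-SLRC if for every $E\subseteq[n]$ with $|E|\le t$, $E$ can be indexed as $\{i_1,\dots,i_{|E|}\}$ such that each $i_\ell$ has a recovering set $R_\ell\subseteq([n]\setminus E)\cup\{i_1,\dots,i_{\ell-1}\}$ with $|R_\ell|\le r$. *)

(* Defs.v *)
From HB Require Import structures.
From mathcomp Require Import all_boot all_algebra.
Set Implicit Arguments. Unset Strict Implicit. Unset Printing Implicit Defensive.
Import GRing.Theory.
Local Open Scope ring_scope.

(* A linear code of length n over F is a subspace C of row vectors 'rV[F]_n;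
   coordinate i of a codeword x is x 0 i. *)

Definition recovering_set (F : fieldType) (n : nat) (C : {vspace 'rV[F]_n})
    (i : 'I_n) (R : {set 'I_n}) : Prop :=
  i \notin R /\
  exists a : 'I_n -> F,
    (forall j, j \in R -> a j != 0) /\
    (forall x : 'rV[F]_n, x \in C -> x 0 i = \sum_(j in R) a j * x 0 j).

Definition is_SLRC (F : fieldType) (n k r t : nat) (C : {vspace 'rV[F]_n}) : Prop :=
  \dim C = k /\
  forall E : {set 'I_n}, (#|E| <= t)%N ->
    exists s : seq 'I_n,
      [/\ uniq s, [set x in s] = E &
        forall (s1 s2 : seq 'I_n) (i : 'I_n), s = s1 ++ i :: s2 ->
          exists R : {set 'I_n},
            [/\ recovering_set C i R, (#|R| <= r)%N &
                R \subset (~: E) :|: [set x in s1]]].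

(* Main.v *)
Require Import Defs.
From HB Require Import structures.
From mathcomp Require Import all_boot all_algebra.
From mathcomp Require Import zify.
Local Open Scope nat_scope.

Section Aux.
Variables (F : finFieldType) (n : nat) (C : {vspace 'rV[F]_n}) (r : nat).

Definition good (E : {set 'I_n}) (i : 'I_n) := exists R : {set 'I_n},
  [/\ recovering_set C i R, (#|R| <= r)%N & R \subset ~: E].

Lemma peel (E : {set 'I_n}) :
  (forall E' : {set 'I_n}, E' \subset E -> E' != set0 -> exists2 i, i \in E' & good E' i) ->
  exists s : seq 'I_n,
      [/\ uniq s, [set x in s] = E &
        forall (s1 s2 : seq 'I_n) (i : 'I_n), s = s1 ++ i :: s2 ->
          exists R : {set 'I_n},
            [/\ recovering_set C i R, (#|R| <= r)%N &
                R \subset (~: E) :|: [set x in s1]]].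
Proof.
have [m] := ubnP #|E|; elim: m E => // m IH E HE H.
have [->|En0] := eqVneq E set0.
  exists [::]; split; [done| apply/setP=> x; rewrite !inE // | by move=> [|? ?] ? ?].
have [i iE [R0 [R0r R0c R0s]]] := H E (subxx _) En0.
have HE' : #|E :\ i| < m by move: HE; rewrite (cardsD1 i E) iE add1n ltnS.
have H' : forall E' : {set 'I_n}, E' \subset E :\ i -> E' != set0 -> exists2 i, i \in E' & good E' i.
  by move=> E' sE' nE'; apply: H => //; apply: subset_trans sE' (subsetDl _ _).
have [s' [us' ss' Hs']] := IH (E :\ i) HE' H'.
have is' : (i \in s') = false.
  by have := in_set (fun x => x \in s') i; rewrite ss' !inE eqxx /= => <-.
exists (i :: s'); split.
- by rewrite /= us' is'.
- apply/setP => x; rewrite !inE -[x \in s'](in_set (fun x => x \in s')) ss' !inE.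
  by case: eqP => // ->; rewrite iE.
- move=> [|j s1] s2 i0 /= [].
    move=> <- _; exists R0; split => //.
    by apply: subset_trans R0s (subsetUl _ _).
  move=> <- /Hs' [R [Rr Rc Rs]]; exists R; split => //.
  apply: subset_trans Rs _; apply/subsetP => x; rewrite !inE.
  by case: (x == i); case: (x \in E); case: (x \in s1).
Qed.
End Aux.

Theorem lemma2 (F : finFieldType) (n k : nat) (C : {vspace 'rV[F]_n})
    (A B : {set 'I_n}) (t1 t2 r : nat) :
  A :&: B = set0 -> A :|: B = [set: 'I_n] ->
  (1 <= r)%N ->
  \dim C = k ->
  (forall E : {set 'I_n}, E != set0 -> E \subset A -> (#|E| <= t1)%N ->
     exists2 i, i \in E & exists R : {set 'I_n},
       [/\ recovering_set C i R, (#|R| <= r)%N & R \subset A :\: E]) ->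
  (forall E : {set 'I_n}, E != set0 -> E \subset A -> (#|E| <= t1 + t2 + 1)%N ->
     exists2 i, i \in E & exists R : {set 'I_n},
       [/\ recovering_set C i R, (#|R| <= r)%N & R \subset ~: E]) ->
  (forall E : {set 'I_n}, E != set0 -> E \subset B -> (#|E| <= t2)%N ->
     exists2 i, i \in E & exists R : {set 'I_n},
       [/\ recovering_set C i R, (#|R| <= r)%N & R \subset B :\: E]) ->
  (forall E : {set 'I_n}, E != set0 -> E \subset B -> (#|E| <= t1 + t2 + 1)%N ->
     exists2 i, i \in E & exists R : {set 'I_n},
       [/\ recovering_set C i R, (#|R| <= r)%N & R \subset ~: E]) ->
  is_SLRC k r (t1 + t2 + 1)%N C.
Proof.
move=> AB0 ABT _ dC H1 H2 H3 H4; split => // E Et.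
apply: peel => E' sE' nE'.
have E't : #|E'| <= t1 + t2 + 1 by apply: leq_trans Et; apply: subset_leq_card.
have cover : E' = (E' :&: A) :|: (E' :&: B) by rewrite -setIUr ABT setIT.
have [EB0|EBn] := eqVneq (E' :&: B) set0.
  have sA : E' \subset A by rewrite cover EB0 setU0 subsetIr.
  by have [i iE [R [? ? ?]]] := H2 E' nE' sA E't; exists i => //; exists R.
have [EA0|EAn] := eqVneq (E' :&: A) set0.
  have sB : E' \subset B by rewrite cover EA0 set0U subsetIr.
  by have [i iE [R [? ? ?]]] := H4 E' nE' sB E't; exists i => //; exists R.
have card : #|E' :&: A| + #|E' :&: B| = #|E'|.
  rewrite [in RHS]cover cardsU.
  have -> : (E' :&: A) :&: (E' :&: B) = set0.
    by rewrite setIACA AB0 setI0.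
  by rewrite cards0 subn0.
have [leA|gtA] := leqP #|E' :&: A| t1.
  have [i iE [R [Rr Rc Rs]]] := H1 _ EAn (subsetIr _ _) leA.
  exists i; first by move: iE; rewrite inE => /andP[].
  exists R; split => //; apply: subset_trans Rs _; apply/subsetP => x.
  by rewrite !inE; case: (x \in E'); case: (x \in A).
have leB : #|E' :&: B| <= t2 by lia.
have [i iE [R [Rr Rc Rs]]] := H3 _ EBn (subsetIr _ _) leB.
exists i; first by move: iE; rewrite inE => /andP[].
exists R; split => //; apply: subset_trans Rs _; apply/subsetP => x.
by rewrite !inE; case: (x \in E'); case: (x \in B).
Qed.
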